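(* Every UA-theory over $\mathbb{I}$ gives rise to an fb-monad on $[\mathbb{I},\mathbf{Set}]$: namely, for a theory $\langle |\mathbb{I}|,\mathrm{Op}_{[\mathbb{I},\mathbf{Set}]}\uplus\mathrm{Op},E_{[\mathbb{I},\mathbf{Set}]}\uplus E\rangle$, the forgetful functor from its category of models to $[\mathbb{I},\mathbf{Set}]$ has a left adjoint and the induced monad on $[\mathbb{I},\mathbf{Set}]$ is finitary based.
   Context: $\mathcal{N}$ is a countable set of names; $\mathbb{I}$ is the category of finite subsets of $\mathcal{N}$ and injective maps, $|\mathbb{I}|$ its underlying discrete category. $\mathrm{Op}_{[\mathbb{I},\mathbf{Set}]}$ is the many-sorted signature with sorts the finite subsets of $\mathcal{N}$ and operation symbols $(b/a)_S:S\cup\{a\}\to S\cup\{b\}$ ($a\neq b$, $a,b\notin S$) and $w_{S,a}:S\to S\cup\{a\}$ ($a\notin S$); $E_{[\mathbb{I},\mathbf{Set}]}$ is a set of equations over it whose models are exactly the presheaves $A\in[\mathbb{I},\mathbf{Set}]$ (carrier of sort $S$ being $A(S)$, $w_{S,a}$ interpreted as $A$ of the inclusion, $(b/a)_S$ as $A$ of the renaming $a\mapsto b$ fixing $S$). A UA-theory over $\mathbb{I}$ is a many-sorted equational theory $\langle |\mathbb{I}|,\mathrm{Op}_{[\mathbb{I},\mathbf{Set}]}\uplus\mathrm{Op},E_{[\mathbb{I},\mathbf{Set}]}\uplus E\rangle$ with $\mathrm{Op}$ an additional set of finitary many-sorted operation symbols and $E$ a set of equations. An fb-monad on $[\mathbb{I},\mathbf{Set}]$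 is a monad whose underlying functor preserves filtered colimits and is based, i.e. preserves the canonical coequalizers $F^{\mathbb{T}}U^{\mathbb{T}}F^{\mathbb{T}}U^{\mathbb{T}}A\rightrightarrows F^{\mathbb{T}}U^{\mathbb{T}}A\to A$ for the adjunction $F^{\mathbb{T}}\dashv U^{\mathbb{T}}$ where $U^{\mathbb{T}}:[\mathbb{I},\mathbf{Set}]\to[|\mathbb{I}|,\mathbf{Set}]$ is restriction. *)

(* Defs.v *)
From HB Require Import structures.
From mathcomp Require Import all_boot finmap.
From Stdlib Require Import FunctionalExtensionality ProofIrrelevance.

Set Implicit Arguments.
Unset Strict Implicit.
Unset Printing Implicit Defensive.

Local Open Scope fset_scope.

(* The category I: finite subsets of the countable set of names N = nat,
   and injective maps between them.                                    *)

Notation fsetN := {fset nat}.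

Definition elt (S : fsetN) := {x : nat | x \in S}.

Record Inj (S T : fsetN) := MkInj {
  inj_fun :> elt S -> elt T;
  inj_injective : injective inj_fun }.

Definition iid (S : fsetN) : Inj S S := @MkInj S S id (fun x y h => h).

Definition icomp (S T U : fsetN) (g : Inj T U) (f : Inj S T) : Inj S U :=
  @MkInj S U (g \o f)
    (fun x y e => @inj_injective _ _ f _ _ (@inj_injective _ _ g _ _ e)).

Lemma Inj_ext (S T : fsetN) (f g : Inj S T) : f =1 g -> f = g.
Proof.
case: f g => f fi [g gi] /= e.
have efg : f = g by apply: functional_extensionality.
subst g; congr MkInj; apply: proof_irrelevance.
Qed.

Definition ren_nat (a b x : nat) := if x == a then b else x.

Lemma ren_mem (S : fsetN) (a b x : nat) :
  x \in S `|` [fset a] -> ren_nat a b x \in S `|` [fset b].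
Proof.
rewrite /ren_nat !in_fsetU !in_fset1.
case: (x =P a) => [_ _|xa]; first by rewrite eqxx orbT.
by case/orP => [->//|/eqP]; move: xa.
Qed.

Definition ren_fun (S : fsetN) (a b : nat) (x : elt (S `|` [fset a])) :
  elt (S `|` [fset b]) := exist _ (ren_nat a b (val x)) (ren_mem b (valP x)).

Lemma ren_fun_inj (S : fsetN) (a b : nat) :
  b \notin S -> injective (@ren_fun S a b).
Proof.
move=> hb [x hx] [y hy] /(congr1 val) /=; rewrite /ren_nat => e.
apply: val_inj => /=.
move: hx hy e; rewrite !in_fsetU !in_fset1.
case: (x =P a) => [->|xa]; case: (y =P a) => [->|ya] //=.
- by rewrite orbF => _ hy e; subst y; rewrite hy in hb.
- by rewrite orbF => hx _ e; subst x; rewrite hx in hb.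
Qed.

(* (b/a)_S is interpreted by A applied to this injection *)
Definition ren_inj (S : fsetN) (a b : nat) (hb : b \notin S) :
  Inj (S `|` [fset a]) (S `|` [fset b]) :=
  @MkInj _ _ (@ren_fun S a b) (@ren_fun_inj S a b hb).

Lemma wk_mem (S : fsetN) (a x : nat) : x \in S -> x \in S `|` [fset a].
Proof. by rewrite in_fsetU => ->. Qed.

Definition wk_fun (S : fsetN) (a : nat) (x : elt S) : elt (S `|` [fset a]) :=
  exist _ (val x) (wk_mem a (valP x)).

Lemma wk_fun_inj (S : fsetN) (a : nat) : injective (@wk_fun S a).
Proof. by move=> x y /(congr1 val) /= /val_inj. Qed.

(* w_{S,a} is interpreted by A applied to the inclusion S -> S ∪ {a} *)
Definition wk_inj (S : fsetN) (a : nat) : Inj S (S `|` [fset a]) :=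
  @MkInj _ _ (@wk_fun S a) (@wk_fun_inj S a).

(* The functor category [I, Set]                                       *)

Record presheaf := {
  pob :> fsetN -> Type;
  pact : forall S T : fsetN, Inj S T -> pob S -> pob T;
  pact_id : forall S (x : pob S), pact (iid S) x = x;
  pact_comp : forall S T U (f : Inj S T) (g : Inj T U) (x : pob S),
      pact (icomp g f) x = pact g (pact f x) }.

Arguments pact p {S T} f x.

Record nt (A B : presheaf) := {
  ntf : forall S : fsetN, A S -> B S;
  ntnat : forall S T (f : Inj S T) (x : A S),
      ntf (pact A f x) = pact B f (ntf x) }.

Arguments ntf {A B} n S x.

Definition nt_eq (A B : presheaf) (f g : nt A B) : Prop :=
  forall S (x : A S), @ntf A B f S x = @ntf A B g S x.

Definition nt_id (A : presheaf) : nt A A :=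
  @Build_nt A A (fun S x => x) (fun S T f x => erefl).

Lemma nt_comp_nat (A B C : presheaf) (g : nt B C) (f : nt A B) S T
  (h : Inj S T) (x : A S) :
  @ntf B C g T (@ntf A B f T (pact A h x)) = pact C h (@ntf B C g S (@ntf A B f S x)).
Proof. by rewrite ntnat ntnat. Qed.

Definition nt_comp (A B C : presheaf) (g : nt B C) (f : nt A B) : nt A C :=
  @Build_nt A C (fun S x => @ntf B C g S (@ntf A B f S x)) (nt_comp_nat g f).

(* UA-theories over I                                                   *)

(* the additional signature Op: finitary many-sorted operation symbols
   o : s_1 ... s_n -> s, with sorts finite subsets of N *)
Record signature := {
  sop : Type;
  sar : sop -> seq fsetN;
  stg : sop -> fsetN }.

Fixpoint hprod (A : fsetN -> Type) (l : seq fsetN) : Type :=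
  match l with
  | [::] => unit
  | s :: l' => (A s * hprod A l')%type
  end.

Fixpoint hmap (A B : fsetN -> Type) (f : forall s, A s -> B s) (l : seq fsetN) :
  hprod A l -> hprod B l :=
  match l return hprod A l -> hprod B l with
  | [::] => fun _ => tt
  | s :: l' => fun p => (f s p.1, hmap f p.2)
  end.

(* Many-sorted terms over the signature Op_[I,Set] ⊎ Op, in a finite
   sorted variable context G (variable i has sort nth fset0 G i).
   tren S a b  is the operation symbol (b/a)_S (a <> b, a,b ∉ S),
   twk S a     is the operation symbol w_{S,a}  (a ∉ S),
   top o       is an additional operation symbol o ∈ Op.              *)
Inductive term (Sg : signature) (G : seq fsetN) : fsetN -> Type :=
| tvar (i : 'I_(size G)) : term Sg G (nth fset0 G i)
| tren (S : fsetN) (a b : nat) :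
    a != b -> a \notin S -> b \notin S ->
    term Sg G (S `|` [fset a]) -> term Sg G (S `|` [fset b])
| twk (S : fsetN) (a : nat) :
    a \notin S -> term Sg G S -> term Sg G (S `|` [fset a])
| top (o : sop Sg) : terms Sg G (sar o) -> term Sg G (stg o)
with terms (Sg : signature) (G : seq fsetN) : seq fsetN -> Type :=
| tnil : terms Sg G [::]
| tcons (s : fsetN) (l : seq fsetN) :
    term Sg G s -> terms Sg G l -> terms Sg G (s :: l).

Record equation (Sg : signature) := {
  eq_ctx : seq fsetN;
  eq_sort : fsetN;
  eq_lhs : term Sg eq_ctx eq_sort;
  eq_rhs : term Sg eq_ctx eq_sort }.

(* A UA-theory < |I|, Op_[I,Set] ⊎ Op, E_[I,Set] ⊎ E >, given by the
   additional operation symbols Op and the additional equations E.    *)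
Record ua_theory := {
  th_sig : signature;
  th_eqs : equation th_sig -> Prop }.

Fixpoint eval (Sg : signature) (A : presheaf)
  (mop : forall o : sop Sg, hprod A (sar o) -> A (stg o))
  (G : seq fsetN) (env : forall i : 'I_(size G), A (nth fset0 G i))
  (s : fsetN) (t : term Sg G s) {struct t} : A s :=
  match t in term _ _ s return A s with
  | tvar i => env i
  | tren S0 a b _ _ hb t' => pact A (ren_inj a hb) (eval mop env t')
  | twk S0 a _ t' => pact A (wk_inj S0 a) (eval mop env t')
  | top o ts => mop o (evals mop env ts)
  end
with evals (Sg : signature) (A : presheaf)
  (mop : forall o : sop Sg, hprod A (sar o) -> A (stg o))
  (G : seq fsetN) (env : forall i : 'I_(size G), A (nth fset0 G i))
  (l : seq fsetN) (ts : terms Sg G l) {struct ts} : hprod A l :=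
  match ts in terms _ _ l return hprod A l with
  | tnil => tt
  | tcons s l t ts' => (eval mop env t, evals mop env ts')
  end.

(* Models of the UA-theory: models of E_[I,Set] are exactly presheaves,
   so a model is a presheaf together with an interpretation of Op
   satisfying every equation of E. *)
Record model (Th : ua_theory) := {
  mcar :> presheaf;
  mop : forall o : sop (th_sig Th), hprod mcar (sar o) -> mcar (stg o);
  msat : forall e : equation (th_sig Th), th_eqs e ->
      forall env : (forall i : 'I_(size (eq_ctx e)), mcar (nth fset0 (eq_ctx e) i)),
      eval mop env (eq_lhs e) = eval mop env (eq_rhs e) }.

Arguments mop {Th} m o args.

Record mhom (Th : ua_theory) (M N : model Th) := {
  mh_nt : nt M N;
  mh_op : forall (o : sop (th_sig Th)) (args : hprod M (sar o)),
      @ntf M N mh_nt (stg o) (mop M o args) = mop N o (hmap (@ntf M N mh_nt) args) }.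

(* A left adjoint to the forgetful functor Mod(Th) -> [I,Set],
   given (equivalently) by a universal arrow X -> U(F X) for each X. *)
Record left_adjoint (Th : ua_theory) := {
  fr_ob : presheaf -> model Th;
  fr_unit : forall X : presheaf, nt X (fr_ob X);
  fr_ext : forall (X : presheaf) (M : model Th), nt X M -> mhom (fr_ob X) M;
  fr_ext_comm : forall (X : presheaf) (M : model Th) (f : nt X M),
      nt_eq (nt_comp (mh_nt (fr_ext f)) (fr_unit X)) f;
  fr_ext_unique : forall (X : presheaf) (M : model Th) (f : nt X M)
      (g : mhom (fr_ob X) M),
      nt_eq (nt_comp (mh_nt g) (fr_unit X)) f -> nt_eq (mh_nt g) (mh_nt (fr_ext f)) }.

Arguments fr_ob {Th} l X.
Arguments fr_unit {Th} l X.
Arguments fr_ext {Th} l {X M} f.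

Definition Tob (Th : ua_theory) (L : left_adjoint Th) (X : presheaf) : presheaf :=
  mcar (fr_ob L X).

Definition Tmap (Th : ua_theory) (L : left_adjoint Th) (X Y : presheaf)
  (h : nt X Y) : nt (Tob L X) (Tob L Y) :=
  mh_nt (fr_ext L (nt_comp (fr_unit L Y) h)).

(* Filtered colimits in [I,Set]                                        *)

Record smallcat := {
  cob : Type;
  chom : cob -> cob -> Type;
  cid : forall i, chom i i;
  ccomp : forall i j k, chom j k -> chom i j -> chom i k;
  ccomp_idl : forall i j (u : chom i j), ccomp (cid j) u = u;
  ccomp_idr : forall i j (u : chom i j), ccomp u (cid i) = u;
  ccomp_assoc : forall i j k l (u : chom i j) (v : chom j k) (w : chom k l),
      ccomp w (ccomp v u) = ccomp (ccomp w v) u }.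

Definition filtered (J : smallcat) : Prop :=
  inhabited (cob J) /\
  (forall i j : cob J, exists k, inhabited (chom i k) /\ inhabited (chom j k)) /\
  (forall (i j : cob J) (u v : chom i j),
      exists k (w : chom j k), ccomp w u = ccomp w v).

Record diagram (J : smallcat) := {
  dob : cob J -> presheaf;
  dmap : forall i j : cob J, chom i j -> nt (dob i) (dob j) }.

Definition functorial (J : smallcat) (D : diagram J) : Prop :=
  (forall i, nt_eq (dmap D (cid i)) (nt_id (dob D i))) /\
  (forall i j k (u : chom i j) (v : chom j k),
      nt_eq (dmap D (ccomp v u)) (nt_comp (dmap D v) (dmap D u))).

Definition is_cocone (J : smallcat) (D : diagram J) (L : presheaf)
  (c : forall i, nt (dob D i) L) : Prop :=
  forall i j (u : chom i j), nt_eq (nt_comp (c j) (dmap D u)) (c i).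

Definition is_colimit (J : smallcat) (D : diagram J) (L : presheaf)
  (c : forall i, nt (dob D i) L) : Prop :=
  is_cocone c /\
  forall (L' : presheaf) (c' : forall i, nt (dob D i) L'),
    is_cocone c' ->
    exists u : nt L L',
      (forall i, nt_eq (nt_comp u (c i)) (c' i)) /\
      (forall u' : nt L L', (forall i, nt_eq (nt_comp u' (c i)) (c' i)) ->
         nt_eq u' u).

Arguments is_colimit {J} D L c.

Definition Tdiag (Th : ua_theory) (L : left_adjoint Th) (J : smallcat)
  (D : diagram J) : diagram J :=
  @Build_diagram J (fun i => Tob L (dob D i)) (fun i j u => Tmap L (dmap D u)).

Definition finitary (Th : ua_theory) (L : left_adjoint Th) : Prop :=
  forall (J : smallcat) (D : diagram J) (C : presheaf)
    (c : forall i, nt (dob D i) C),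
    filtered J -> functorial D -> is_colimit D C c ->
    is_colimit (Tdiag L D) (Tob L C) (fun i => Tmap L (c i)).

(* Based: preservation of the canonical coequalizers
   F U F U A ==> F U A --> A  for  F ⊣ U : [I,Set] -> [|I|,Set],
   U restriction, F its left adjoint (left Kan extension):
   (F Y)(S) = Σ_{S'} I(S',S) × Y(S').                                 *)

Definition FU_ob (A : fsetN -> Type) (S : fsetN) : Type :=
  {S' : fsetN & (Inj S' S * A S')%type}.

Definition FU_act (A : fsetN -> Type) (S T : fsetN) (f : Inj S T)
  (x : FU_ob A S) : FU_ob A T :=
  existT _ (projT1 x) (icomp f (projT2 x).1, (projT2 x).2).

Lemma FU_act_id (A : fsetN -> Type) S (x : FU_ob A S) : FU_act (iid S) x = x.
Proof.
case: x => S' [g y]; rewrite /FU_act /=.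
by have -> : icomp (iid S) g = g by apply: Inj_ext.
Qed.

Lemma FU_act_comp (A : fsetN -> Type) S T U (f : Inj S T) (g : Inj T U)
  (x : FU_ob A S) : FU_act (icomp g f) x = FU_act g (FU_act f x).
Proof.
case: x => S' [h y]; rewrite /FU_act /=.
by have -> : icomp (icomp g f) h = icomp g (icomp f h) by apply: Inj_ext.
Qed.

Definition FU (A : presheaf) : presheaf :=
  @Build_presheaf (FU_ob A) (@FU_act A) (@FU_act_id A) (@FU_act_comp A).

Definition eps_fun (A : presheaf) (S : fsetN) (x : FU A S) : A S :=
  pact A (projT2 x).1 (projT2 x).2.

Lemma eps_nat (A : presheaf) S T (f : Inj S T) (x : FU A S) :
  eps_fun (pact (FU A) f x) = pact A f (eps_fun x).
Proof. by case: x => S' [g y]; rewrite /eps_fun /= pact_comp. Qed.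

Definition eps (A : presheaf) : nt (FU A) A := @Build_nt (FU A) A (@eps_fun A) (@eps_nat A).

Definition FUeps_fun (A : presheaf) (S : fsetN) (x : FU (FU A) S) : FU A S :=
  existT _ (projT1 x) ((projT2 x).1, eps_fun (projT2 x).2).

Lemma FUeps_nat (A : presheaf) S T (f : Inj S T) (x : FU (FU A) S) :
  FUeps_fun (pact (FU (FU A)) f x) = pact (FU A) f (FUeps_fun x).
Proof. by case: x. Qed.

Definition FUeps (A : presheaf) : nt (FU (FU A)) (FU A) :=
  @Build_nt (FU (FU A)) (FU A) (@FUeps_fun A) (@FUeps_nat A).

Definition is_coequalizer (B C E : presheaf) (p q : nt B C) (e : nt C E) : Prop :=
  nt_eq (nt_comp e p) (nt_comp e q) /\
  forall (E' : presheaf) (e' : nt C E'),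
    nt_eq (nt_comp e' p) (nt_comp e' q) ->
    exists u : nt E E',
      nt_eq (nt_comp u e) e' /\
      (forall u' : nt E E', nt_eq (nt_comp u' e) e' -> nt_eq u' u).

Definition based (Th : ua_theory) (L : left_adjoint Th) : Prop :=
  forall A : presheaf,
    is_coequalizer (Tmap L (FUeps A)) (Tmap L (eps (FU A))) (Tmap L (eps A)).

(* Main.v *)
Require Import Defs.
From mathcomp Require Import all_boot finmap.
From Stdlib Require Import FunctionalExtensionality ProofIrrelevance PropExtensionality IndefiniteDescription Relations.

Set Implicit Arguments.
Unset Strict Implicit.
Unset Printing Implicit Defensive.

Lemma sig_eqP (A : Type) (P : A -> Prop) (u v : {x | P x}) :
  proj1_sig u = proj1_sig v -> u = v.
Proof. case: u v => x p [y q] /= e; subst y; congr exist; apply: proof_irrelevance. Qed.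

Section Quo.
Variable X : Type.
Variable R : X -> X -> Prop.
Definition quo := {P : X -> Prop | exists x, P = R x}.
Definition cls (x : X) : quo := exist _ (R x) (ex_intro _ x erefl).
Definition rep (q : quo) : X :=
  proj1_sig (constructive_indefinite_description _ (proj2_sig q)).
Lemma cls_rep q : cls (rep q) = q.
Proof.
rewrite /rep; case: (constructive_indefinite_description _ _) => x /= e.
by apply: sig_eqP => /=; rewrite e.
Qed.
Lemma cls_surj q : exists x, cls x = q.
Proof. by exists (rep q); apply: cls_rep. Qed.
Hypothesis Rr : forall x, R x x.
Hypothesis Rs : forall x y, R x y -> R y x.
Hypothesis Rt : forall x y z, R x y -> R y z -> R x z.
Lemma cls_eq x y : cls x = cls y -> R x y.
Proof. by move=> /(congr1 (@proj1_sig _ _)) /= ->. Qed.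
Lemma eq_cls x y : R x y -> cls x = cls y.
Proof.
move=> h; apply: sig_eqP => /=; apply: functional_extensionality => z.
apply: propositional_extensionality; split; eauto.
Qed.
Lemma rep_cls x : R (rep (cls x)) x.
Proof. by apply: cls_eq; rewrite cls_rep. Qed.
End Quo.

Lemma hmap_comp (A B C : fsetN -> Type) (f : forall s, B s -> C s)
  (g : forall s, A s -> B s) l (x : hprod A l) :
  hmap f (hmap g x) = hmap (fun s y => f s (g s y)) x.
Proof. by elim: l x => [|s l IH] x //=; rewrite IH. Qed.

Lemma hmap_ext (A B : fsetN -> Type) (f g : forall s, A s -> B s) l (x : hprod A l) :
  (forall s y, f s y = g s y) -> hmap f x = hmap g x.
Proof. by move=> e; elim: l x => [|s l IH] x //=; rewrite IH e. Qed.

Lemma hmap_id (A : fsetN -> Type) l (x : hprod A l) : hmap (fun s y => y) x = x.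
Proof. by elim: l x => [|s l IH] [] //= a r; rewrite IH. Qed.

Scheme term_mind := Induction for term Sort Prop
with terms_mind := Induction for terms Sort Prop.

Lemma eval_hom (Sg : signature) (A B : presheaf) mA mB (h : forall S, A S -> B S)
 (hnat : forall S T (f : Inj S T) x, h T (pact A f x) = pact B f (h S x))
 (hop : forall o args, h _ (mA o args) = mB o (hmap h args))
 G (env : forall i : 'I_(size G), A (nth fset0 G i)) :
 forall s (t : term Sg G s), h s (eval mA env t) = eval mB (fun i => h _ (env i)) t.
Proof.
apply (term_mind (P := fun s t => h s (eval mA env t) = eval mB (fun i => h _ (env i)) t)
                 (P0 := fun l ts => hmap h (evals mA env ts) = evals mB (fun i => h _ (env i)) ts)).
- by [].
- by move=> S a b ab ha hb t IH /=; rewrite hnat IH.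
- by move=> S a ha t IH /=; rewrite hnat IH.
- by move=> o ts IH /=; rewrite hop IH.
- by [].
- by move=> s l t IH ts IHs /=; rewrite IH IHs.
Qed.

Section LA.
Variable Th : ua_theory.
Notation Sg := (th_sig Th).

Definition mcomp (M N P : model Th) (g : mhom N P) (f : mhom M N) : mhom M P.
refine (@Build_mhom Th M P (nt_comp (mh_nt g) (mh_nt f)) _).
by move=> o args /=; rewrite !mh_op hmap_comp.
Defined.

Definition mid (M : model Th) : mhom M M.
refine (@Build_mhom Th M M (nt_id M) _).
by move=> o args /=; rewrite hmap_id.
Defined.

Variable L : left_adjoint Th.

Lemma uniq_hom (X : presheaf) (M : model Th) (g1 g2 : mhom (fr_ob L X) M) :
  nt_eq (nt_comp (mh_nt g1) (fr_unit L X)) (nt_comp (mh_nt g2) (fr_unit L X)) ->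
  nt_eq (mh_nt g1) (mh_nt g2).
Proof.
move=> h S x.
have h1 := fr_ext_unique (f := nt_comp (mh_nt g1) (fr_unit L X)) (g := g1) (fun _ _ => erefl).
have h2 := fr_ext_unique (f := nt_comp (mh_nt g1) (fr_unit L X)) (g := g2)
  (fun S y => esym (h S y)).
by rewrite h1 h2.
Qed.

Definition Tmh (X Y : presheaf) (h : nt X Y) : mhom (fr_ob L X) (fr_ob L Y) :=
  fr_ext L (nt_comp (fr_unit L Y) h).

Lemma Tmap_unit (X Y : presheaf) (h : nt X Y) S (x : X S) :
  ntf (Tmap L h) S (ntf (fr_unit L X) S x) = ntf (fr_unit L Y) S (ntf h S x).
Proof. exact: (fr_ext_comm L (nt_comp (fr_unit L Y) h) x). Qed.

Lemma Tmap_op (X Y : presheaf) (h : nt X Y) o args :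
  ntf (Tmap L h) _ (mop (fr_ob L X) o args) = mop (fr_ob L Y) o (hmap (ntf (Tmap L h)) args).
Proof. exact: (mh_op (Tmh h) args). Qed.

Lemma Tmap_comp (X Y Z : presheaf) (g : nt Y Z) (f : nt X Y) :
  nt_eq (Tmap L (nt_comp g f)) (nt_comp (Tmap L g) (Tmap L f)).
Proof.
apply: (uniq_hom (g1 := Tmh (nt_comp g f)) (g2 := mcomp (Tmh g) (Tmh f))) => S x /=.
by rewrite -!/(Tmap L _) !Tmap_unit.
Qed.

Lemma Tmap_ext (X Y : presheaf) (f g : nt X Y) :
  nt_eq f g -> nt_eq (Tmap L f) (Tmap L g).
Proof.
move=> e; apply: (uniq_hom (g1 := Tmh f) (g2 := Tmh g)) => S x /=.
by rewrite -!/(Tmap L _) !Tmap_unit e.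
Qed.

Lemma Tmap_id (X : presheaf) : nt_eq (Tmap L (nt_id X)) (nt_id _).
Proof.
apply: (uniq_hom (g1 := Tmh (nt_id X)) (g2 := mid _)) => S x /=.
by rewrite -!/(Tmap L _) !Tmap_unit.
Qed.

Lemma ext_unit (X : presheaf) (M : model Th) (f : nt X M) S (x : X S) :
  ntf (mh_nt (fr_ext L f)) S (ntf (fr_unit L X) S x) = ntf f S x.
Proof. exact: (fr_ext_comm L f x). Qed.

End LA.

Section Free.
Variable Th : ua_theory.
Notation Sg := (th_sig Th).
Variable X : presheaf.

Inductive tm : fsetN -> Type :=
| tv S : X S -> tm S
| ta S T : Inj S T -> tm S -> tm T
| to (o : sop Sg) : tms (sar o) -> tm (stg o)
with tms : seq fsetN -> Type :=
| tn : tms [::]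
| tc s l : tm s -> tms l -> tms (s :: l).

Scheme tm_mind := Induction for tm Sort Prop
with tms_mind := Induction for tms Sort Prop.

Fixpoint tr G (env : forall i : 'I_(size G), tm (nth fset0 G i)) s (t : term Sg G s)
  {struct t} : tm s :=
  match t in term _ _ s return tm s with
  | tvar i => env i
  | tren S0 a b _ _ hb t' => ta (ren_inj a hb) (tr env t')
  | twk S0 a _ t' => ta (wk_inj S0 a) (tr env t')
  | top o ts => to (trs env ts)
  end
with trs G (env : forall i : 'I_(size G), tm (nth fset0 G i)) l (ts : terms Sg G l)
  {struct ts} : tms l :=
  match ts in terms _ _ l return tms l with
  | tnil => tn
  | tcons s l t ts' => tc (tr env t) (trs env ts')
  end.

Inductive eqv : forall S, tm S -> tm S -> Prop :=
| e_refl S (t : tm S) : eqv t t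
| e_sym S (t t' : tm S) : eqv t t' -> eqv t' t
| e_trans S (t1 t2 t3 : tm S) : eqv t1 t2 -> eqv t2 t3 -> eqv t1 t3
| e_nat S T (f : Inj S T) x : eqv (tv (pact X f x)) (ta f (tv x))
| e_id S (t : tm S) : eqv (ta (iid S) t) t
| e_comp S T U (f : Inj S T) (g : Inj T U) t : eqv (ta (icomp g f) t) (ta g (ta f t))
| e_ta S T (f : Inj S T) t t' : eqv t t' -> eqv (ta f t) (ta f t')
| e_to o (ts ts' : tms (sar o)) : eqvs ts ts' -> eqv (to ts) (to ts')
| e_ax (e : equation Sg) : th_eqs e -> forall env,
    eqv (tr env (eq_lhs e)) (tr env (eq_rhs e))
with eqvs : forall l, tms l -> tms l -> Prop :=
| es_n : eqvs tn tn
| es_c s l (t t' : tm s) (ts ts' : tms l) :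
    eqv t t' -> eqvs ts ts' -> eqvs (tc t ts) (tc t' ts').

Scheme eqv_mind := Induction for eqv Sort Prop
with eqvs_mind := Induction for eqvs Sort Prop.

Definition FMc S := quo (@eqv S).
Definition cl S (t : tm S) : FMc S := cls (@eqv S) t.
Definition rp S (q : FMc S) : tm S := rep q.
Lemma cl_rp S (q : FMc S) : cl (rp q) = q.
Proof. exact: cls_rep. Qed.
Lemma eq_cl S (t t' : tm S) : eqv t t' -> cl t = cl t'.
Proof. exact: (eq_cls (@e_sym S) (@e_trans S)). Qed.
Lemma cl_eq S (t t' : tm S) : cl t = cl t' -> eqv t t'.
Proof. exact: (cls_eq (@e_refl S)). Qed.
Lemma rp_cl S (t : tm S) : eqv (rp (cl t)) t.
Proof. apply: cl_eq; by rewrite cl_rp. Qed.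

Definition FMact S T (f : Inj S T) (q : FMc S) : FMc T := cl (ta f (rp q)).

Lemma FMact_id S (q : FMc S) : FMact (iid S) q = q.
Proof. by rewrite /FMact -{2}(cl_rp q); apply: eq_cl; apply: e_id. Qed.

Lemma FMact_comp S T U (f : Inj S T) (g : Inj T U) (q : FMc S) :
  FMact (icomp g f) q = FMact g (FMact f q).
Proof.
rewrite /FMact; apply: eq_cl; apply: e_trans; first exact: e_comp.
apply: e_ta; apply: e_sym; exact: rp_cl.
Qed.

Definition FMp : presheaf := @Build_presheaf FMc FMact FMact_id FMact_comp.

Lemma FMact_cl S T (f : Inj S T) (t : tm S) : pact FMp f (cl t) = cl (ta f t).
Proof. by apply: eq_cl; apply: e_ta; apply: rp_cl. Qed.

Fixpoint reps l : hprod FMc l -> tms l :=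
  match l return hprod FMc l -> tms l with
  | [::] => fun _ => tn
  | s :: l' => fun p => tc (rp p.1) (reps p.2)
  end.

Fixpoint clss l (ts : tms l) : hprod FMc l :=
  match ts in tms l return hprod FMc l with
  | tn => tt
  | @tc s l t ts' => (cl t, clss ts')
  end.

Lemma reps_clss l (ts : tms l) : eqvs (reps (clss ts)) ts.
Proof. elim: ts => [|s l' t ts IH] /=; [exact: es_n| apply: es_c => //; exact: rp_cl]. Qed.

Definition FMop (o : sop Sg) (args : hprod FMc (sar o)) : FMc (stg o) :=
  cl (to (reps args)).

Lemma FMop_clss o (ts : tms (sar o)) : FMop (clss ts) = cl (to ts).
Proof. apply: eq_cl; apply: e_to; exact: reps_clss. Qed.

Lemma eval_cl G (env : forall i : 'I_(size G), tm (nth fset0 G i)) :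
  forall s (t : term Sg G s), eval (A := FMp) FMop (fun i => cl (env i)) t = cl (tr env t).
Proof.
apply (term_mind
  (P := fun s t => eval (A := FMp) FMop (fun i => cl (env i)) t = cl (tr env t))
  (P0 := fun l ts => evals (A := FMp) FMop (fun i => cl (env i)) ts = clss (trs env ts))).
- by [].
- by move=> S a b ab ha hb t IH /=; rewrite IH; exact: FMact_cl.
- by move=> S a ha t IH /=; rewrite IH; exact: FMact_cl.
- by move=> o ts IH /=; rewrite IH FMop_clss.
- by [].
- by move=> s l t IH ts IHs /=; rewrite IH IHs.
Qed.

Lemma FM_sat (e : equation Sg) : th_eqs e ->
  forall env : (forall i : 'I_(size (eq_ctx e)), FMp (nth fset0 (eq_ctx e) i)),
  eval (A := FMp) FMop env (eq_lhs e) = eval (A := FMp) FMop env (eq_rhs e).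
Proof.
move=> he env.
have -> : env = (fun i => cl (rp (env i))).
  by apply: functional_extensionality_dep => i; rewrite cl_rp.
rewrite !eval_cl; apply: eq_cl; exact: e_ax.
Qed.

Definition FM : model Th := @Build_model Th FMp FMop FM_sat.

Lemma eta_nat S T (f : Inj S T) (x : X S) :
  cl (tv (pact X f x)) = pact FMp f (cl (tv x)).
Proof. by rewrite FMact_cl; apply: eq_cl; apply: e_nat. Qed.

Definition eta : nt X FM := @Build_nt X FM (fun S x => cl (tv x)) eta_nat.

Section Ext.
Variable M : model Th.
Variable f : nt X M.

Fixpoint I S (t : tm S) {struct t} : M S :=
  match t in tm S return M S with
  | @tv S0 x => ntf f S0 x
  | @ta S0 T0 g t => pact M g (I t)
  | @to o ts => mop M o (Is ts)
  end
with Is l (ts : tms l) {struct ts} : hprod M l :=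
  match ts in tms l return hprod M l with
  | tn => tt
  | @tc s l t ts => (I t, Is ts)
  end.

Lemma I_tr G (env : forall i : 'I_(size G), tm (nth fset0 G i)) :
  forall s (t : term Sg G s), I (tr env t) = eval (mop M) (fun i => I (env i)) t.
Proof.
apply (term_mind
  (P := fun s t => I (tr env t) = eval (mop M) (fun i => I (env i)) t)
  (P0 := fun l ts => Is (trs env ts) = evals (mop M) (fun i => I (env i)) ts)).
- by [].
- by move=> S a b ab ha hb t IH /=; rewrite IH.
- by move=> S a ha t IH /=; rewrite IH.
- by move=> o ts IH /=; rewrite IH.
- by [].
- by move=> s l t IH ts IHs /=; rewrite IH IHs.
Qed.

Lemma I_resp S (t t' : tm S) : eqv t t' -> I t = I t'.
Proof.
move: S t t'.
apply (eqv_mind (P := fun S t t' _ => I t = I t') (P0 := fun l ts ts' _ => Is ts = Is ts')).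
- by [].
- by move=> S t t' _ ->.
- by move=> S t1 t2 t3 _ -> _ ->.
- by move=> S T g x /=; rewrite ntnat.
- by move=> S t /=; rewrite pact_id.
- by move=> S T U g h t /=; rewrite pact_comp.
- by move=> S T g t t' _ /= ->.
- by move=> o ts ts' _ /= ->.
- by move=> e he env; rewrite !I_tr; apply: msat.
- by [].
- by move=> s l t t' ts ts' _ /= -> _ ->.
Qed.

Definition extf S (q : FM S) : M S := I (rp q).

Lemma extf_cl S (t : tm S) : extf (cl t) = I t.
Proof. apply: I_resp; exact: rp_cl. Qed.

Lemma extf_nat S T (g : Inj S T) (q : FM S) :
  extf (pact FM g q) = pact M g (extf q).
Proof. by rewrite /= /FMact extf_cl. Qed.

Definition ext_nt : nt FM M := @Build_nt FM M extf extf_nat.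

Lemma Is_reps l (args : hprod FMc l) : Is (reps args) = hmap extf args.
Proof. by elim: l args => [|s l IH] args //=; rewrite IH. Qed.

Lemma ext_op o (args : hprod FM (sar o)) :
  ntf ext_nt _ (mop FM o args) = mop M o (hmap (ntf ext_nt) args).
Proof. by rewrite /= /FMop extf_cl /= Is_reps. Qed.

Definition ext_hom : mhom FM M := @Build_mhom Th FM M ext_nt ext_op.

Lemma ext_comm : nt_eq (nt_comp (mh_nt ext_hom) eta) f.
Proof. by move=> S x /=; rewrite extf_cl. Qed.

Lemma ext_unique (g : mhom FM M) :
  nt_eq (nt_comp (mh_nt g) eta) f -> nt_eq (mh_nt g) (mh_nt ext_hom).
Proof.
move=> hg.
have key : forall S (t : tm S), ntf (mh_nt g) S (cl t) = I t.
  apply (tm_mind (P := fun S t => ntf (mh_nt g) S (cl t) = I t)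
                 (P0 := fun l ts => hmap (ntf (mh_nt g)) (clss ts) = Is ts)).
  - by move=> S x; exact: hg.
  - by move=> S T h t IH /=; rewrite -FMact_cl ntnat IH.
  - by move=> o ts IH /=; rewrite -FMop_clss (mh_op g) IH.
  - by [].
  - by move=> s l t IH ts IHs /=; rewrite IH IHs.
move=> S q /=; by rewrite -{1}(cl_rp q) key.
Qed.

End Ext.
End Free.

Definition L0 (Th : ua_theory) : left_adjoint Th :=
  @Build_left_adjoint Th (@FM Th) (@eta Th) (@ext_hom Th) (@ext_comm Th) (@ext_unique Th).

Lemma crst_map (T1 T2 : Type) (R1 : relation T1) (R2 : relation T2) (F : T1 -> T2) :
  (forall x y, R1 x y -> clos_refl_sym_trans T2 R2 (F x) (F y)) ->
  forall x y, clos_refl_sym_trans T1 R1 x y -> clos_refl_sym_trans T2 R2 (F x) (F y).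
Proof.
move=> h x y; elim => [a b /h //|a|a b _ IH|a b c _ IH1 _ IH2].
- exact: rst_refl.
- exact: rst_sym.
- exact: rst_trans IH2.
Qed.

Lemma crst_eq (T1 T2 : Type) (R1 : relation T1) (F : T1 -> T2) :
  (forall x y, R1 x y -> F x = F y) ->
  forall x y, clos_refl_sym_trans T1 R1 x y -> F x = F y.
Proof. by move=> h x y; elim => [a b /h //|a //|a b _ ->//|a b c _ -> _ ->]. Qed.

Fixpoint hrel (A : fsetN -> Type) (R : forall S, A S -> A S -> Prop) l :
  hprod A l -> hprod A l -> Prop :=
  match l return hprod A l -> hprod A l -> Prop with
  | [::] => fun _ _ => True
  | s :: l' => fun x y => R s x.1 y.1 /\ hrel R x.2 y.2
  end.

Section QP.
Variable Y : presheaf.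
Variable R : forall S, Y S -> Y S -> Prop.
Hypothesis Rr : forall S (x : Y S), R x x.
Hypothesis Rs : forall S (x y : Y S), R x y -> R y x.
Hypothesis Rt : forall S (x y z : Y S), R x y -> R y z -> R x z.
Hypothesis Rp : forall S T (f : Inj S T) (x y : Y S), R x y -> R (pact Y f x) (pact Y f y).

Definition QPc S := quo (@R S).
Definition qc S (y : Y S) : QPc S := cls (@R S) y.
Definition qr S (q : QPc S) : Y S := rep q.
Lemma qc_qr S (q : QPc S) : qc (qr q) = q.
Proof. exact: cls_rep. Qed.
Lemma eq_qc S (x y : Y S) : R x y -> qc x = qc y.
Proof. exact: (eq_cls (@Rs S) (@Rt S)). Qed.
Lemma qc_eq S (x y : Y S) : qc x = qc y -> R x y.
Proof. exact: (cls_eq (@Rr S)). Qed.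
Lemma qr_qc S (x : Y S) : R (qr (qc x)) x.
Proof. apply: qc_eq; by rewrite qc_qr. Qed.

Definition QPact S T (f : Inj S T) (q : QPc S) : QPc T := qc (pact Y f (qr q)).
Lemma QPact_id S (q : QPc S) : QPact (iid S) q = q.
Proof. by rewrite /QPact pact_id qc_qr. Qed.
Lemma QPact_comp S T U (f : Inj S T) (g : Inj T U) (q : QPc S) :
  QPact (icomp g f) q = QPact g (QPact f q).
Proof. rewrite /QPact pact_comp; apply: eq_qc; apply: Rp; apply: Rs; exact: qr_qc. Qed.
Definition QP : presheaf := @Build_presheaf QPc QPact QPact_id QPact_comp.
Lemma QPact_qc S T (f : Inj S T) (y : Y S) : pact QP f (qc y) = qc (pact Y f y).
Proof. by apply: eq_qc; apply: Rp; apply: qr_qc. Qed.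
Definition qnt : nt Y QP := @Build_nt Y QP qc (fun S T f y => esym (QPact_qc f y)).
End QP.

Lemma sat_transfer (Th : ua_theory) (M : model Th) (B : presheaf) mB
  (h : forall S, M S -> B S)
  (hnat : forall S T (f : Inj S T) x, h T (pact M f x) = pact B f (h S x))
  (hop : forall o args, h _ (mop M o args) = mB o (hmap h args))
  (e : equation (th_sig Th)) (he : th_eqs e) env' :
  eval mB (fun i => h _ (env' i)) (eq_lhs e) = eval mB (fun i => h _ (env' i)) (eq_rhs e).
Proof. by rewrite -!(eval_hom hnat hop) msat. Qed.

Section QM.
Variable Th : ua_theory.
Variable M : model Th.
Variable R : forall S, M S -> M S -> Prop.
Hypothesis Rr : forall S (x : M S), R x x.
Hypothesis Rs : forall S (x y : M S), R x y -> R y x.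
Hypothesis Rt : forall S (x y z : M S), R x y -> R y z -> R x z.
Hypothesis Rp : forall S T (f : Inj S T) (x y : M S), R x y -> R (pact M f x) (pact M f y).
Hypothesis Ro : forall o (xs ys : hprod M (sar o)), hrel R xs ys -> R (mop M o xs) (mop M o ys).

Definition QMp := QP Rr Rs Rt Rp.
Definition QMop o (args : hprod QMp (sar o)) : QMp (stg o) :=
  qc R (mop M o (hmap (@qr _ R) args)).

Lemma hrel_qrqc l (xs : hprod M l) : hrel R xs (hmap (@qr _ R) (hmap (@qc _ R) xs)).
Proof. elim: l xs => [|s l IH] xs //=; split => //; apply: Rs; exact: qr_qc. Qed.

Lemma qc_op o (xs : hprod M (sar o)) : qc R (mop M o xs) = QMop (hmap (@qc _ R) xs).
Proof. apply: (eq_qc Rs Rt); apply: Ro; exact: hrel_qrqc. Qed.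

Lemma QM_sat (e : equation (th_sig Th)) : th_eqs e ->
  forall env : (forall i : 'I_(size (eq_ctx e)), QMp (nth fset0 (eq_ctx e) i)),
  eval (A := QMp) QMop env (eq_lhs e) = eval (A := QMp) QMop env (eq_rhs e).
Proof.
move=> he env.
have -> : env = (fun i => qc R (qr (env i))).
  by apply: functional_extensionality_dep => i; rewrite qc_qr.
apply: (sat_transfer (M := M) (B := QMp) (h := @qc _ R)) => //.
- by move=> S T f x; rewrite QPact_qc.
- exact: qc_op.
Qed.

Definition QM : model Th := @Build_model Th QMp QMop QM_sat.

Definition qhom : mhom M QM := @Build_mhom Th M QM (qnt Rr Rs Rt Rp) qc_op.
End QM.

Section Based.
Variable Th : ua_theory.
Variable L : left_adjoint Th.
Variable A : presheaf.

Notation C := (FU A).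
Notation B := (FU (FU A)).
Notation TC := (fr_ob L C).
Notation TB := (fr_ob L B).
Notation TA := (fr_ob L A).
Notation Tm := (Tmap L).
Notation pp := (FUeps A).
Notation qq := (eps (FU A)).
Notation ee := (eps A).
Notation etaC := (ntf (fr_unit L C) _).

Definition s_fun S (x : C S) : B S :=
  match x with existT S' (g, y) => existT _ S' (g, existT _ S' (iid S', y) : FU A S') end.

Lemma s_nat S T (f : Inj S T) (x : C S) : s_fun (pact C f x) = pact B f (s_fun x).
Proof. by case: x => S' [g y]. Qed.

Definition snt : nt C B := @Build_nt C B s_fun s_nat.

Lemma ps : nt_eq (nt_comp pp snt) (nt_id C).
Proof. by move=> S [S' [g y]]; rewrite /= /FUeps_fun /= /eps_fun /= pact_id. Qed.

Lemma qs : nt_eq (nt_comp qq snt) (nt_id C).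
Proof.
move=> S [S' [g y]]; rewrite /= /eps_fun /= /FU_act /=.
by have -> : icomp g (iid S') = g by apply: Inj_ext.
Qed.

Lemma F1 : nt_eq (nt_comp ee pp) (nt_comp ee qq).
Proof. by move=> S [S' [g [S'' [h y]]]]; rewrite /= /eps_fun /= pact_comp. Qed.

Lemma Tcomp (X Y Z : presheaf) (g : nt Y Z) (f : nt X Y) S z :
  ntf (Tm g) S (ntf (Tm f) S z) = ntf (Tm (nt_comp g f)) S z.
Proof. by rewrite (Tmap_comp (L:=L) g f). Qed.

Lemma Tps S z : ntf (Tm pp) S (ntf (Tm snt) S z) = z.
Proof. by rewrite Tcomp (Tmap_ext (L:=L) ps) (Tmap_id (L:=L)). Qed.
Lemma Tqs S z : ntf (Tm qq) S (ntf (Tm snt) S z) = z.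
Proof. by rewrite Tcomp (Tmap_ext (L:=L) qs) (Tmap_id (L:=L)). Qed.
Lemma TF1 S z : ntf (Tm ee) S (ntf (Tm pp) S z) = ntf (Tm ee) S (ntf (Tm qq) S z).
Proof. by rewrite !Tcomp (Tmap_ext (L:=L) F1). Qed.

Definition R0 S (z z' : TC S) : Prop :=
  exists w : TB S, z = ntf (Tm pp) S w /\ z' = ntf (Tm qq) S w.
Definition Rb S : TC S -> TC S -> Prop := clos_refl_sym_trans _ (@R0 S).

Lemma Rb_r S (x : TC S) : Rb x x. Proof. exact: rst_refl. Qed.
Lemma Rb_s S (x y : TC S) : Rb x y -> Rb y x. Proof. exact: rst_sym. Qed.
Lemma Rb_t S (x y z : TC S) : Rb x y -> Rb y z -> Rb x z. Proof. exact: rst_trans. Qed.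
Lemma Rb_p S T (f : Inj S T) (x y : TC S) : Rb x y -> Rb (pact TC f x) (pact TC f y).
Proof.
apply: crst_map => a b [w [-> ->]]; apply: rst_step.
by exists (pact TB f w); rewrite !ntnat.
Qed.

Definition R0t l (xs ys : hprod TC l) : Prop :=
  exists ws : hprod TB l, xs = hmap (ntf (Tm pp)) ws /\ ys = hmap (ntf (Tm qq)) ws.

Lemma Ro_t o (xs ys : hprod TC (sar o)) :
  clos_refl_sym_trans _ (@R0t _) xs ys -> Rb (mop TC o xs) (mop TC o ys).
Proof.
apply: crst_map => a b [ws [-> ->]]; apply: rst_step.
by exists (mop TB o ws); rewrite !(Tmap_op (L:=L)).
Qed.

Lemma hps l (xs : hprod TC l) :
  hmap (ntf (Tm pp)) (hmap (ntf (Tm snt)) xs) = xs.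
Proof. by rewrite hmap_comp (hmap_ext _ (@Tps)) hmap_id. Qed.
Lemma hqs l (xs : hprod TC l) :
  hmap (ntf (Tm qq)) (hmap (ntf (Tm snt)) xs) = xs.
Proof. by rewrite hmap_comp (hmap_ext _ (@Tqs)) hmap_id. Qed.

Lemma hrel_Rt l (xs ys : hprod TC l) :
  hrel Rb xs ys -> clos_refl_sym_trans _ (@R0t _) xs ys.
Proof.
elim: l xs ys => [|s l IH] xs ys /=.
  by case: xs; case: ys => _; apply: rst_refl.
case: xs ys => x xs [y ys] /= [hxy /IH hxs].
apply: (rst_trans _ _ _ (y, xs)).
- move: hxy; apply: (crst_map (F := fun x => (x, xs) : hprod TC (s :: l))).
  move=> a b [w [-> ->]]; apply: rst_step.
  by exists (w, hmap (ntf (Tm snt)) xs); rewrite /= hps hqs.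
- move: hxs; apply: (crst_map (F := fun xs => (y, xs) : hprod TC (s :: l))).
  move=> a b [ws [-> ->]]; apply: rst_step.
  by exists (ntf (Tm snt) _ y, ws); rewrite /= Tps Tqs.
Qed.

Lemma Rb_o o (xs ys : hprod TC (sar o)) : hrel Rb xs ys -> Rb (mop TC o xs) (mop TC o ys).
Proof. by move=> h; apply: Ro_t; apply: hrel_Rt. Qed.

Definition Qb : model Th := QM Rb_r Rb_s Rb_t Rb_p Rb_o.
Definition pib : mhom TC Qb := qhom Rb_r Rb_s Rb_t Rb_p Rb_o.

Definition sig_ S (a : A S) : C S := existT _ S (iid S, a).

Lemma Kgen S (x : C S) : Rb (etaC x) (etaC (sig_ (ntf ee S x))).
Proof.
apply: rst_sym; apply: rst_step.
exists (ntf (fr_unit L B) S (existT _ S (iid S, x))).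
rewrite !(Tmap_unit L) /=; split => //.
by rewrite FU_act_id.
Qed.

Lemma kap_nat S T (f : Inj S T) (a : A S) :
  qc Rb (etaC (sig_ (pact A f a))) = pact Qb f (qc Rb (etaC (sig_ a))).
Proof.
have -> : pact Qb f (qc Rb (etaC (sig_ a))) = qc Rb (pact TC f (etaC (sig_ a))) :=
  QPact_qc Rb_r Rb_s Rb_t Rb_p f _.
rewrite -ntnat.
apply: (eq_qc Rb_s Rb_t).
set x := pact C f (sig_ a).
have e1 : ntf ee _ x = pact A f a.
  rewrite /x /= /eps_fun /= pact_comp pact_id //.
apply: Rb_s; move: (Kgen x); by rewrite e1.
Qed.

Definition kap : nt A Qb := @Build_nt A Qb (fun S a => qc Rb (etaC (sig_ a))) kap_nat.
Definition kh : mhom TA Qb := fr_ext L kap.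

Lemma eq_pi : nt_eq (mh_nt pib) (nt_comp (mh_nt kh) (Tm ee)).
Proof.
apply: (uniq_hom (g1 := pib) (g2 := mcomp kh (Tmh L ee))) => S x /=.
rewrite -/(Tmap L ee) (Tmap_unit L).
rewrite /kh ext_unit /=.
apply: (eq_qc Rb_s Rb_t); exact: Kgen.
Qed.

Lemma TmE_resp S (z z' : TC S) : Rb z z' -> ntf (Tm ee) S z = ntf (Tm ee) S z'.
Proof. by apply: crst_eq => a b [w [-> ->]]; apply: TF1. Qed.

Definition mf S (q : Qb S) : TA S := ntf (Tm ee) S (qr q).

Lemma mf_nat S T (f : Inj S T) (q : Qb S) : mf (pact Qb f q) = pact TA f (mf q).
Proof.
rewrite /mf -ntnat; apply: TmE_resp; exact: (qr_qc Rb_r).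
Qed.

Definition mnt : nt Qb TA := @Build_nt Qb TA mf mf_nat.

Lemma mf_op o (args : hprod Qb (sar o)) :
  ntf mnt _ (mop Qb o args) = mop TA o (hmap (ntf mnt) args).
Proof.
rewrite /= /mf /QMop.
rewrite (TmE_resp (qr_qc Rb_r _)) (Tmap_op (L:=L)) hmap_comp //.
Qed.

Definition mh : mhom Qb TA := @Build_mhom Th Qb TA mnt mf_op.

Lemma mk S (y : TA S) : mf (ntf (mh_nt kh) S y) = y.
Proof.
have := uniq_hom (g1 := mcomp mh kh) (g2 := mid TA).
move=> /(_ _) h; apply: h => T a /=.
rewrite /kh ext_unit /= /mf.
rewrite (TmE_resp (qr_qc Rb_r _)) (Tmap_unit L) /= /eps_fun /= pact_id //.
Qed.

Lemma based_A : is_coequalizer (Tm pp) (Tm qq) (Tm ee).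
Proof.
split; first by move=> S x /=; apply: TF1.
move=> E' e' he'.
have eresp : forall S (z z' : TC S), Rb z z' -> ntf e' S z = ntf e' S z'.
  move=> S; apply: crst_eq => a b [w [-> ->]]; exact: he'.
pose uf S (y : TA S) := ntf e' S (qr (ntf (mh_nt kh) S y)).
have unat : forall S T (f : Inj S T) (y : TA S), uf T (pact TA f y) = pact E' f (uf S y).
  move=> S T f y; rewrite /uf ntnat /= -ntnat; apply: eresp; exact: (qr_qc Rb_r).
exists (@Build_nt TA E' uf unat); split.
- move=> S z /=; rewrite /uf.
  have /= <- := eq_pi z; apply: eresp; exact: (qr_qc Rb_r).
- move=> u' hu' S y /=.
  rewrite -{1}(mk y) /mf; exact: (hu' S _).
Qed.

End Based.

Section Fin.
Variable Th : ua_theory.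
Variable L : left_adjoint Th.
Variable J : smallcat.
Variable D : diagram J.
Variable C : presheaf.
Variable c : forall i, nt (dob D i) C.
Hypothesis hfil : filtered J.
Hypothesis hfun : functorial D.
Hypothesis hcol : is_colimit D C c.

Notation TD i := (fr_ob L (dob D i)).
Notation TDm u := (Tmap L (dmap D u)).
Notation TC := (fr_ob L C).

Lemma TDm_comp (i j k : cob J) (u : chom i j) (v : chom j k) S w :
  ntf (TDm (ccomp v u)) S w = ntf (TDm v) S (ntf (TDm u) S w).
Proof. by rewrite (Tmap_ext (L:=L) (proj2 hfun _ _ _ u v)) (Tmap_comp (L:=L)). Qed.

Lemma TDm_id (i : cob J) S w : ntf (TDm (cid i)) S w = w.
Proof. by rewrite (Tmap_ext (L:=L) (proj1 hfun i)) (Tmap_id (L:=L)). Qed.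

Lemma join (i j : cob J) : exists k (u : chom i k) (v : chom j k), True.
Proof. by case: (proj1 (proj2 hfil) i j) => k [[u] [v]]; exists k, u, v. Qed.

Lemma coeq (i j : cob J) (u v : chom i j) : exists k (w : chom j k), ccomp w u = ccomp w v.
Proof. exact: (proj2 (proj2 hfil)). Qed.

Definition Yc S := {i : cob J & TD i S}.
Definition Yact S T (f : Inj S T) (y : Yc S) : Yc T :=
  existT _ (projT1 y) (pact (TD (projT1 y)) f (projT2 y)).
Lemma Yact_id S (y : Yc S) : Yact (iid S) y = y.
Proof. by case: y => i w; rewrite /Yact /= pact_id. Qed.
Lemma Yact_comp S T U (f : Inj S T) (g : Inj T U) (y : Yc S) :
  Yact (icomp g f) y = Yact g (Yact f y).
Proof. by case: y => i w; rewrite /Yact /= pact_comp. Qed.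
Definition Yp : presheaf := @Build_presheaf Yc Yact Yact_id Yact_comp.

Definition E S (x y : Yc S) : Prop :=
  exists k (u : chom (projT1 x) k) (v : chom (projT1 y) k),
    ntf (TDm u) S (projT2 x) = ntf (TDm v) S (projT2 y).

Lemma Er S (x : Yp S) : E x x.
Proof. by exists (projT1 x), (cid _), (cid _). Qed.
Lemma Es S (x y : Yp S) : E x y -> E y x.
Proof. by case=> k [u [v e]]; exists k, v, u. Qed.
Lemma Et S (x y z : Yp S) : E x y -> E y z -> E x z.
Proof.
case=> k1 [u1 [v1 e1]] [k2 [u2 [v2 e2]]].
case: (join k1 k2) => k3 [a [b _]].
case: (coeq (ccomp a v1) (ccomp b u2)) => k4 [w ew].
exists k4, (ccomp w (ccomp a u1)), (ccomp w (ccomp b v2)).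
by rewrite !TDm_comp e1 -e2 -(TDm_comp v1 a) -(TDm_comp (ccomp a v1) w) ew !TDm_comp.
Qed.
Lemma Ep S T (f : Inj S T) (x y : Yp S) : E x y -> E (pact Yp f x) (pact Yp f y).
Proof. by case=> k [u [v e]]; exists k, u, v; rewrite /= !ntnat e. Qed.

Lemma push S (i j : cob J) (w : TD i S) (w' : TD j S) :
  E (existT _ i w : Yc S) (existT _ j w') -> forall (k : cob J) (u : chom i k) (v : chom j k),
  exists m (r : chom k m),
    ntf (TDm r) S (ntf (TDm u) S w) = ntf (TDm r) S (ntf (TDm v) S w').
Proof.
case=> k0 [u0 [v0 /= e0]] k u v.
case: (join k k0) => k1 [a [b _]].
case: (coeq (ccomp a u) (ccomp b u0)) => k2 [c1 ec1].
case: (coeq (ccomp c1 (ccomp a v)) (ccomp c1 (ccomp b v0))) => k3 [d ed].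
exists k3, (ccomp d (ccomp c1 a)).
have h1 : ntf (TDm (ccomp d (ccomp c1 a))) S (ntf (TDm u) S w) =
          ntf (TDm (ccomp d (ccomp c1 (ccomp a u)))) S w by rewrite !TDm_comp.
have h2 : ntf (TDm (ccomp d (ccomp c1 a))) S (ntf (TDm v) S w') =
          ntf (TDm (ccomp d (ccomp c1 (ccomp a v)))) S w' by rewrite !TDm_comp.
rewrite h1 h2 ed ec1 !TDm_comp e0 //.
Qed.

Definition Q := QP Er Es Et Ep.
Definition iof (i : cob J) S (w : TD i S) : Q S := @qc Yp E S (existT _ i w : Yc S).

Lemma iof_nat (i : cob J) S T (f : Inj S T) (w : TD i S) : iof (pact _ f w) = pact Q f (iof w).
Proof. by rewrite /iof (QPact_qc Er Es Et Ep). Qed.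

Lemma iof_coc (i j : cob J) (u : chom i j) S (w : TD i S) : iof (ntf (TDm u) S w) = iof w.
Proof. apply: (eq_qc Es Et); by exists j, (cid j), u; rewrite /= TDm_id. Qed.

Lemma iof_qr S (q : Q S) : iof (projT2 (qr q)) = q.
Proof. by rewrite /iof -{3}(qc_qr q); case: (qr q). Qed.

Lemma liftt l (args : hprod Q l) :
  exists k (ws : hprod (TD k) l), hmap (@iof k) ws = args.
Proof.
elim: l args => [|s l IH] args /=.
  case: (proj1 hfil) => k; by exists k, tt; case: args.
case: args => a r; case: (IH r) => k1 [ws1 e1].
case: (join (projT1 (qr a)) k1) => k [u [v _]].
exists k, (ntf (TDm u) _ (projT2 (qr a)), hmap (ntf (TDm v)) ws1) => /=.
rewrite iof_coc iof_qr hmap_comp -e1; congr pair.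
by apply: hmap_ext => s' y; rewrite iof_coc.
Qed.

Lemma tpush l (k1 k2 : cob J) (ws1 : hprod (TD k1) l) (ws2 : hprod (TD k2) l) :
  hmap (@iof k1) ws1 = hmap (@iof k2) ws2 -> forall (K : cob J) (u : chom k1 K) (v : chom k2 K),
  exists m (r : chom K m),
    hmap (ntf (TDm r)) (hmap (ntf (TDm u)) ws1) = hmap (ntf (TDm r)) (hmap (ntf (TDm v)) ws2).
Proof.
elim: l ws1 ws2 => [|s l IH] ws1 ws2 /=.
  by move=> _ K u v; exists K, (cid K).
case: ws1 ws2 => w1 r1 [w2 r2] /= e K u v.
have ew := qc_eq Er (congr1 fst e : iof w1 = iof w2).
have er := congr1 snd e; rewrite /= in er.
case: (push ew u v) => m1 [t1 et1].
case: (IH _ _ er m1 (ccomp t1 u) (ccomp t1 v)) => m2 [t2 et2].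
exists m2, (ccomp t2 t1); rewrite !TDm_comp et1; congr pair.
move: et2; rewrite !hmap_comp => et2.
rewrite (hmap_ext (g := fun s y => ntf (TDm t2) s (ntf (TDm (ccomp t1 u)) s y))); last first.
  by move=> s' y; rewrite !TDm_comp.
rewrite et2; apply: hmap_ext => s' y; by rewrite !TDm_comp.
Qed.

Definition lift (o : sop (th_sig Th)) (args : hprod Q (sar o)) :
  {k : cob J & {ws : hprod (TD k) (sar o) | hmap (@iof k) ws = args}}.
Proof.
have [k hk] := constructive_indefinite_description _ (liftt args).
exists k; exact: (constructive_indefinite_description _ hk).
Defined.

Definition QFop (o : sop (th_sig Th)) (args : hprod Q (sar o)) : Q (stg o) :=
  iof (mop (TD (projT1 (lift args))) o (proj1_sig (projT2 (lift args)))).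

Lemma QFop_spec (o : sop (th_sig Th)) (k : cob J) (ws : hprod (TD k) (sar o)) :
  QFop (hmap (@iof k) ws) = iof (mop (TD k) o ws).
Proof.
rewrite /QFop; case: (lift _) => k' [ws' e] /=.
case: (join k' k) => K [u [v _]].
case: (tpush e u v) => m [r er].
apply: (eq_qc Es Et); exists m, (ccomp r u), (ccomp r v) => /=.
by rewrite !TDm_comp !(Tmap_op (L:=L)) !hmap_comp in er *; rewrite er.
Qed.

Lemma ub n (js : 'I_n -> cob J) : exists k, forall i, inhabited (chom (js i) k).
Proof.
suff: forall s : seq 'I_n, exists k, forall i, i \in s -> inhabited (chom (js i) k).
  by case/(_ (enum 'I_n)) => k hk; exists k => i; apply: hk; rewrite mem_enum.
elim=> [|i0 s [k hk]].
  by case: (proj1 hfil) => k; exists k.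
case: (join k (js i0)) => k' [a [b _]]; exists k' => i; rewrite in_cons.
case: (i =P i0) => [-> _|_ /= /hk [t]]; first by constructor.
by constructor; exact: (ccomp a t).
Qed.

Lemma Q_sat (e : equation (th_sig Th)) : th_eqs e ->
  forall env : (forall i : 'I_(size (eq_ctx e)), Q (nth fset0 (eq_ctx e) i)),
  eval (A := Q) QFop env (eq_lhs e) = eval (A := Q) QFop env (eq_rhs e).
Proof.
move=> he env.
pose js i := projT1 (qr (env i)).
have [k hk] := ub js.
have har : forall i, exists a : chom (js i) k, True by move=> i; case: (hk i) => a; exists a.
pose ar i := proj1_sig (constructive_indefinite_description _ (har i)).
have -> : env = (fun i => iof (ntf (TDm (ar i)) _ (projT2 (qr (env i))))).
  by apply: functional_extensionality_dep => i; rewrite iof_coc iof_qr.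
apply: (sat_transfer (M := TD k) (B := Q) (h := @iof k)) => //.
- by move=> S T f x; rewrite iof_nat.
- by move=> o args; rewrite QFop_spec.
Qed.

Definition Qm : model Th := @Build_model Th Q QFop Q_sat.

Definition iont (i : cob J) : nt (TD i) Qm := @Build_nt (TD i) Qm (@iof i) (@iof_nat i).
Definition ioh (i : cob J) : mhom (TD i) Qm :=
  @Build_mhom Th (TD i) Qm (iont i) (fun o args => esym (QFop_spec args)).

Lemma cp_coc : is_cocone (fun i => nt_comp (mh_nt (ioh i)) (fr_unit L (dob D i))).
Proof. by move=> i j u S x /=; rewrite -(Tmap_unit L) iof_coc. Qed.

Lemma Tc_coc (i k : cob J) (u : chom i k) S w :
  ntf (Tmap L (c k)) S (ntf (TDm u) S w) = ntf (Tmap L (c i)) S w.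
Proof.
by rewrite Tcomp (Tmap_ext (L:=L) (proj1 hcol i k u)).
Qed.

Lemma E_resp (Z : fsetN -> Type) (F : forall i S, TD i S -> Z S)
  (hF : forall (i k : cob J) (u : chom i k) S w, F k S (ntf (TDm u) S w) = F i S w) S (y y' : Yc S) :
  E y y' -> F _ S (projT2 y) = F _ S (projT2 y').
Proof. by case=> k [u [v e]]; rewrite -(hF _ _ u) -(hF _ _ v) e. Qed.

Definition gf S (q : Q S) : TC S := ntf (Tmap L (c (projT1 (qr q)))) S (projT2 (qr q)).

Lemma gf_io (i : cob J) S (w : TD i S) : gf (iof w) = ntf (Tmap L (c i)) S w.
Proof.
rewrite /gf /iof.
exact: (@E_resp (pob TC) (fun i S w => ntf (Tmap L (c i)) S w) (@Tc_coc) S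
  (qr (@qc Yp E S (existT _ i w))) (existT _ i w) (qr_qc Er _)).
Qed.

Lemma gf_nat S T (f : Inj S T) (q : Q S) : gf (pact Q f q) = pact TC f (gf q).
Proof.
rewrite -{1}(iof_qr q) -iof_nat gf_io ntnat /gf //.
Qed.

Definition gnt : nt Qm TC := @Build_nt Qm TC gf gf_nat.

Lemma gf_op (o : sop (th_sig Th)) (args : hprod Qm (sar o)) :
  ntf gnt _ (mop Qm o args) = mop TC o (hmap (ntf gnt) args).
Proof.
rewrite /= /QFop; case: (lift _) => k [ws e] /=.
rewrite -e gf_io (Tmap_op (L:=L)) hmap_comp; congr (mop _ _ _).
by apply: hmap_ext => s y; rewrite gf_io.
Qed.

Definition gh : mhom Qm TC := @Build_mhom Th Qm TC gnt gf_op.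

Section Phi.
Variable phi : nt C Qm.
Hypothesis hphi : forall i : cob J, nt_eq (nt_comp phi (c i)) (nt_comp (mh_nt (ioh i)) (fr_unit L (dob D i))).

Lemma g_phi : nt_eq (nt_comp gnt phi) (fr_unit L C).
Proof.
have coc : is_cocone (fun i => nt_comp (fr_unit L C) (c i)).
  by move=> i j u S x /=; have /= -> := proj1 hcol i j u S x.
case: (proj2 hcol _ _ coc) => u0 [_ hu].
move=> S x.
rewrite (hu (nt_comp gnt phi)); last first.
  by move=> i T y /=; have /= -> := @hphi i _ y; rewrite gf_io (Tmap_unit L).
by rewrite (hu (fr_unit L C)).
Qed.

Definition hh : mhom TC Qm := fr_ext L phi.

Lemma gh_id S (z : TC S) : gf (ntf (mh_nt hh) S z) = z.
Proof.
have := uniq_hom (g1 := mcomp gh hh) (g2 := mid TC).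
move=> /(_ _) h; apply: h => T x /=.
by rewrite /hh ext_unit; apply: g_phi.
Qed.

Lemma h_Tc (i : cob J) S (w : TD i S) : ntf (mh_nt hh) S (ntf (Tmap L (c i)) S w) = iof w.
Proof.
have := uniq_hom (g1 := mcomp hh (Tmh L (c i))) (g2 := ioh i).
move=> /(_ _) h; apply: h => T x /=.
rewrite -/(Tmap L (c i)) (Tmap_unit L) /hh ext_unit.
by have /= -> := @hphi i _ x.
Qed.
End Phi.

Lemma fin_main : is_colimit (Tdiag L D) (Tob L C) (fun i => Tmap L (c i)).
Proof.
case: (proj2 hcol _ _ cp_coc) => phi [hphi _].
split.
  by move=> i j u S w /=; apply: Tc_coc.
move=> L' c' hc'.
pose uf S (q : Q S) := ntf (c' (projT1 (qr q))) S (projT2 (qr q)).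
have uf_io : forall i S (w : TD i S), uf S (iof w) = ntf (c' i) S w.
  move=> i S w; rewrite /uf /iof.
  exact: (@E_resp (pob L') (fun i S w => ntf (c' i) S w) (fun i' k u T w' => hc' i' k u T w') S
    (qr (@qc Yp E S (existT _ i w))) (existT _ i w) (qr_qc Er _)).
pose vf S (z : TC S) := uf S (ntf (mh_nt (hh phi)) S z).
have vnat : forall S T (f : Inj S T) z, vf T (pact TC f z) = pact L' f (vf S z).
  move=> S T f z; rewrite /vf ntnat -{1}(iof_qr (ntf _ S z)) -iof_nat uf_io ntnat //.
exists (@Build_nt TC L' vf vnat); split.
- by move=> i S w /=; rewrite /vf h_Tc // uf_io.
- move=> u' hu' S z /=.
  rewrite -{1}(gh_id hphi z) /gf /vf /uf.
  exact: (hu' _ S _).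
Qed.

End Fin.

Theorem mainTheorem5 (Th : ua_theory) :
  inhabited (left_adjoint Th) /\
  (forall L : left_adjoint Th, finitary L /\ based L).
Proof.
split; first exact: (inhabits (L0 Th)).
move=> L; split.
- move=> J D C c hf hfu hc; apply: fin_main => //.
- move=> A; exact: (based_A L A).
Qed.
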